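(* Let $t\ge 2$ and $w\ge 1$ be integers and $u=\lfloor(\frac{t}{2}+1)^2\rfloor$. If a $(w,v)$ set system $(\mathcal{X},\mathcal{B})$ is not a $t$-IPPS$(w,v)$, then there exist an integer $s$ with $2\le s\le u$ and an $s$-element subset $\mathcal{U}\subseteq\mathcal{B}$ such that $\big|\bigcup_{B\in\mathcal{U}}B\big|\le (s-1)w$.
   Context: A $(w,v)$ set system is a pair $(\mathcal{X},\mathcal{B})$ with $|\mathcal{X}|=v$ and $\mathcal{B}$ a family of $w$-element subsets (blocks) of $\mathcal{X}$. For a $w$-subset $T\subseteq\mathcal{X}$ let $P_t(T)=\{\mathcal{P}\subseteq\mathcal{B}: |\mathcal{P}|\le t,\ T\subseteq\bigcup_{B\in\mathcal{P}}B\}$. The set system is a $t$-IPPS$(w,v)$ if for every $w$-subset $T\subseteq\mathcal{X}$, either $P_t(T)=\emptyset$ or $\bigcap_{\mathcal{P}\in P_t(T)}\mathcal{P}\neq\emptyset$. *)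

(* Defs.v *)
From mathcomp Require Import all_boot.
Set Implicit Arguments. Unset Strict Implicit. Unset Printing Implicit Defensive.

Definition set_system (X : finType) (w v : nat) (B : {set {set X}}) : Prop :=
  #|X| = v /\ (forall b, b \in B -> #|b| = w).

Definition Pt (X : finType) (B : {set {set X}}) (t : nat) (T : {set X})
  : {set {set {set X}}} :=
  [set P : {set {set X}} | (P \subset B) && (#|P| <= t) &&
                           (T \subset \bigcup_(b in P) b)].

Definition IPPS (X : finType) (t w v : nat) (B : {set {set X}}) : Prop :=
  set_system w v B /\
  forall T : {set X}, #|T| = w ->
    Pt B t T = set0 \/ \bigcap_(P in Pt B t T) P != set0.

(* Main.v *)
Require Import Defs.
From mathcomp Require Import all_boot.
From mathcomp Require Import zify.
Set Implicit Arguments. Unset Strict Implicit. Unset Printing Implicit Defensive.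

Lemma card_bigcup_le (I Y : finType) (A : {pred I}) (F : I -> {set Y}) :
  #|\bigcup_(i in A) F i| <= \sum_(i in A) #|F i|.
Proof.
elim/big_rec2: _ => [|i S n _ IH]; first by rewrite cards0.
apply: leq_trans (leq_card_setU _ _) _.
exact: leq_add.
Qed.

Lemma card_sum (Y : finType) (A : {set Y}) : #|A| = \sum_x ((x \in A) : nat).
Proof. by rewrite -sum1_card big_mkcond; apply eq_bigr => x _; case: (x \in A). Qed.

Lemma count_union (Y : finType) (U : {set {set Y}}) (T : {set Y}) w :
  (forall b, b \in U -> #|b| = w) ->
  (forall x, x \in T -> 1 < #|[set b in U | x \in b]|) ->
  #|\bigcup_(b in U) b| + #|T| <= #|U| * w.
Proof.
move=> Hw HT.
have E: \sum_(b in U) #|b| = #|U| * w.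
  by rewrite -sum_nat_const; apply eq_bigr => b /Hw.
have D: \sum_(b in U) #|b| = \sum_x #|[set b in U | x \in b]|.
  transitivity (\sum_(b in U) \sum_x ((x \in b) : nat)).
    by apply eq_bigr => b _; rewrite card_sum.
  rewrite exchange_big /=; apply eq_bigr => x _.
  rewrite card_sum big_mkcond /=; apply eq_bigr => b _.
  by rewrite inE; case: (b \in U); case: (x \in b).
rewrite -E D (card_sum (\bigcup_(b in U) b)) (card_sum T) -big_split /=.
apply leq_sum => x _.
case xT: (x \in T); first by rewrite addn1; apply: leq_trans (HT _ xT); case: (_ \in _).
rewrite addn0; case xU: (x \in _) => //.
move/bigcupP: xU => [b bU xb].
rewrite card_gt0; apply/set0Pn; exists b; by rewrite inE bU xb.
Qed.

Lemma arith1 a x y z k t : a <= t -> k <= x -> k <= y -> z <= k.-1 -> 0 < k ->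
  a - (x + y - z) <= t - k.+1.
Proof. lia. Qed.

Lemma arith2 p q k t : p <= t -> q <= t -> p + q - k <= t + t - k.
Proof. lia. Qed.

Lemma sqbound k m : 4 * (k + 2 + 2 * m + k * m) <= (k + m + 3) ^ 2.
Proof.
case: (leqP m k) => h.
- have [d ->] : exists d, k = m + d by exists (k - m); lia.
  nia.
- have [d ->] : exists d, m = k + d.+1 by exists (m - k.+1); lia.
  nia.
Qed.

Lemma arith3 u k t w U : 2 <= t -> 1 <= w -> k <= t -> u <= t + t - k + k * (t - k.+1) ->
  U + w <= u * w -> w <= U ->
  [/\ 2 <= u, u <= (t + 2) ^ 2 %/ 4 & U <= (u - 1) * w].
Proof.
move=> t2 w1 kt ub h1 h2; split.
- have : 2 * w <= u * w by lia.
  by rewrite leq_pmul2r.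
- rewrite leq_divRL //.
  case: (ltnP k t) => h.
  + have [m et] : exists m, t = k + m.+1 by exists (t - k.+1); lia.
    have hm : t - k.+1 = m by lia.
    rewrite hm in ub.
    have := sqbound k m.
    rewrite et; nia.
  + have ek : k = t by lia.
    subst k; have e0 : t - t.+1 = 0 by lia.
    rewrite e0 muln0 addn0 in ub.
    nia.
- rewrite mulnBl mul1n; lia.
Qed.

Lemma PtP (X : finType) (B : {set {set X}}) t T P :
  P \in Pt B t T -> [/\ P \subset B, #|P| <= t & T \subset \bigcup_(b in P) b].
Proof. by rewrite inE => /andP[/andP[]]. Qed.

Theorem corollary2 (t w v : nat) (X : finType) (B : {set {set X}}) :
  2 <= t -> 1 <= w ->
  set_system w v B ->
  ~ IPPS t w v B ->
  exists s : nat, exists U : {set {set X}},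
    [/\ 2 <= s, s <= (t + 2) ^ 2 %/ 4, U \subset B, #|U| = s &
        #|\bigcup_(b in U) b| <= (s - 1) * w].
Proof.
move=> t2 w1 ss nI.
have [T /and3P [/eqP Tw PtN capE]] : exists T : {set X},
    [&& #|T| == w, Pt B t T != set0 & \bigcap_(P in Pt B t T) P == set0].
  case: (boolP [exists T : {set X}, [&& #|T| == w, Pt B t T != set0 &
      \bigcap_(P in Pt B t T) P == set0]]) => [/existsP //|/existsPn H].
  exfalso; apply: nI; split=> // T Tw.
  move: (H T); rewrite Tw eqxx /= negb_and negbK => /orP [/eqP|]; [left|right] => //.
set PP := Pt B t T in PtN capE.
have [P0 P0P] := set0Pn _ PtN.
set D := [set pq : {set {set X}} * {set {set X}} | (pq.1 \in PP) && (pq.2 \in PP)].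
have P0D : (P0, P0) \in D by rewrite inE P0P.
case: (arg_minnP (fun pq => #|pq.1 :&: pq.2|) P0D) => [[P Q]].
move=> H0 Hmin; have : (P, Q) \in D := H0; rewrite inE /= => /andP [PPt QPt].
have {}Hmin : forall R S, R \in PP -> S \in PP -> #|P :&: Q| <= #|R :&: S|.
  move=> R S RP SP; apply: (Hmin (R, S) (_ : (R, S) \in D)); by rewrite inE RP SP.
set k := #|P :&: Q| in Hmin.
pose f c := odflt set0 [pick R in PP | c \notin R].
have fP : forall c, f c \in PP /\ c \notin f c.
  move=> c; rewrite /f; case: pickP => [R /andP[]|H] //.
  exfalso.
  have: c \in \bigcap_(R in PP) R.
    by apply/bigcapP => R RP; move: (H R); rewrite RP /= => /negbFE.
  by rewrite (eqP capE) inE.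
set C := P :&: Q.
set PQ := P :|: Q.
set U := PQ :|: \bigcup_(c in C) f c.
have [PB Pt' TP] := PtP PPt.
have [QB Qt' TQ] := PtP QPt.
have UB : U \subset B.
  apply/subsetP => b; rewrite !inE => /orP [/orP [bP|bQ]|].
  - exact: (subsetP PB).
  - exact: (subsetP QB).
  move/bigcupP => [c _ bf]; have [fB _ _] := PtP (fP c).1; exact: (subsetP fB).
have Hw : forall b, b \in U -> #|b| = w by move=> b /(subsetP UB); apply ss.2.
have two : forall x b b', b \in U -> b' \in U -> x \in b -> x \in b' -> b != b' ->
    1 < #|[set b in U | x \in b]|.
  move=> x b b' bU b'U xb xb' ne.
  have sub : [set b; b'] \subset [set b in U | x \in b].
    apply/subsetP => y /set2P [] ->; by rewrite in_set ?bU ?b'U ?xb ?xb'.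
  have := subset_leq_card sub; by rewrite cards2 ne.
have cov : forall x, x \in T -> 1 < #|[set b in U | x \in b]|.
  move=> x xT.
  have /bigcupP [b1 b1P xb1] := subsetP TP x xT.
  have /bigcupP [b2 b2Q xb2] := subsetP TQ x xT.
  have b1U : b1 \in U by rewrite !inE b1P.
  have b2U : b2 \in U by rewrite !inE b2Q orbT.
  case: (eqVneq b1 b2) => [e|ne]; last exact: (two x b1 b2).
  subst b2.
  have [fPP nf] := fP b1.
  have [_ _ Tf] := PtP fPP.
  have /bigcupP [b3 b3f xb3] := subsetP Tf x xT.
  have b3U : b3 \in U.
    by rewrite inE; apply/orP; right; apply/bigcupP; exists b1; rewrite // inE b1P.
  apply: (two x b1 b3) => //.
  by apply/eqP => e; move: nf; rewrite {1}e b3f.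
have cnt := count_union Hw cov.
have TU : T \subset \bigcup_(b in U) b.
  apply: subset_trans TP _; apply/subsetP => x /bigcupP [b bP xb].
  by apply/bigcupP; exists b; rewrite // !inE bP.
have wU := subset_leq_card TU.
have Usub : U \subset PQ :|: \bigcup_(c in C) (f c :\: PQ).
  apply/subsetP => b; rewrite inE => /orP [bPQ|]; first by rewrite inE bPQ.
  move=> /bigcupP [c cC bf]; rewrite inE; case bPQ: (b \in PQ) => //=.
  by apply/bigcupP; exists c; rewrite // inE bPQ bf.
have term : forall c, c \in C -> #|f c :\: PQ| <= t - k.+1.
  move=> c cC.
  have [fPP nf] := fP c.
  have [_ ft _] := PtP fPP.
  have h1 := Hmin _ _ fPP PPt.
  have h2 := Hmin _ _ fPP QPt.
  have h3 : #|(f c :&: P) :&: (f c :&: Q)| <= k.-1.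
    have : (f c :&: P) :&: (f c :&: Q) \subset C :\ c.
      apply/subsetP => y; rewrite !inE => /andP [/andP [yf yP] /andP [_ yQ]].
      rewrite yP yQ !andbT; apply/eqP => e; move: nf; by rewrite -{1}e yf.
    move/subset_leq_card; rewrite [k](cardsD1 c) cC /=; by [].
  rewrite cardsD /PQ setIUr cardsU.
  have hk : 0 < k by rewrite card_gt0; apply/set0Pn; exists c.
  exact: arith1 ft h1 h2 h3 hk.
have Ubd : #|U| <= #|PQ| + k * (t - k.+1).
  apply: leq_trans (subset_leq_card Usub) _.
  apply: leq_trans (leq_card_setU _ _) _; rewrite leq_add2l.
  apply: leq_trans (card_bigcup_le _ _) _.
  rewrite -sum_nat_const; apply: leq_sum => c cC; exact: term.
have PQbd : #|PQ| <= t + t - k by rewrite /PQ cardsU; exact: arith2.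
have kt : k <= t by apply: leq_trans (subset_leq_card (subsetIl P Q)) Pt'.
exists #|U|, U.
have h1 : #|\bigcup_(b in U) b| + w <= #|U| * w by move: cnt; rewrite Tw.
have h2 : w <= #|\bigcup_(b in U) b| by move: wU; rewrite Tw.
have [] := arith3 t2 w1 kt (leq_trans Ubd (leq_add PQbd (leqnn _))) h1 h2.
by move=> *; split.
Qed.
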